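(* For any integer $k$ with $0\le k\le 2$, any code-tuple $F$ that is both $2$-bit delay decodable and extendable, any $i\in[F]$ and $s\in\mathcal{S}$, we have $|\bar{\mathcal{P}}^k_{F,i}(f_i(s))|+|\mathcal{P}^2_{F,\tau_i(s)}|\le 4$.
   Context: $\mathcal{S}$ is a finite source alphabet with $|\mathcal{S}|\ge 2$ and $\mathcal{C}=\{0,1\}$; $\mathcal{A}^k,\mathcal{A}^{\ast},\mathcal{A}^{+}$ are sequences of length $k$, finite length, positive finite length; $\lambda$ empty sequence; $\preceq$ prefix, $\prec$ proper prefix; $\mathrm{suff}(x_1\cdots x_n)=x_2\cdots x_n$. A code-tuple $F$ with $m\ge1$ code tables consists of maps $f_i:\mathcal{S}\to\mathcal{C}^{\ast}$ and $\tau_i:\mathcal{S}\to\{0,\dots,m-1\}$ for $i\in[F]=\{0,\dots,m-1\}$. $f_i^{\ast}(\lambda)=\lambda$, $f_i^{\ast}(\pmb{x})=f_i(x_1)f^{\ast}_{\tau_i(x_1)}(\mathrm{suff}(\pmb{x}))$. For integer $k\ge0$, $\pmb{b}\in\mathcal{C}^{\ast}$: $\mathcal{P}^k_{F,i}(\pmb{b})$ is the set of $\pmb{c}\in\mathcal{C}^k$ such that some $\pmb{x}=x_1\cdots x_n\in\mathcal{S}^{+}$ has $f_i^{\ast}(\pmb{x})\succeq\pmb{b}\pmb{c}$ and $f_i(x_1)\succeq\pmb{b}$; $\bar{\mathcal{P}}^k_{F,i}(\pmb{b})$ the same with $f_i(x_1)\succ\pmb{b}$; $\mathcal{P}^k_{F,i}=\mathcal{P}^k_{F,i}(\lambda)$.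 $F$ is $k$-bit delay decodable if $\mathcal{P}^k_{F,\tau_i(s)}\cap\bar{\mathcal{P}}^k_{F,i}(f_i(s))=\emptyset$ for all $i,s$, and $\mathcal{P}^k_{F,\tau_i(s)}\cap\mathcal{P}^k_{F,\tau_i(s')}=\emptyset$ whenever $s\ne s'$, $f_i(s)=f_i(s')$. $F$ is extendable if $\mathcal{P}^1_{F,i}\ne\emptyset$ for all $i\in[F]$. *)

(* Defs.v *)
From mathcomp Require Import all_boot.
From mathcomp Require Import boolp.

Set Implicit Arguments.
Unset Strict Implicit.
Unset Printing Implicit Defensive.

(* Source alphabet: a finType S; code alphabet C = bool ({0,1}).
   A code-tuple with m code tables: f : 'I_m -> S -> seq bool (f_i),
   tau : 'I_m -> S -> 'I_m (tau_i). *)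

Section CodeTuple.
Variables (S : finType) (m : nat).
Variables (f : 'I_m -> S -> seq bool) (tau : 'I_m -> S -> 'I_m).

Fixpoint fstar (i : 'I_m) (x : seq S) : seq bool :=
  match x with
  | [::] => [::]
  | x1 :: xs => f i x1 ++ fstar (tau i x1) xs
  end.

Definition Pset (k : nat) (i : 'I_m) (b : seq bool) : {set k.-tuple bool} :=
  [set c : k.-tuple bool | `[< exists (x1 : S) (xs : seq S),
      prefix (b ++ val c) (fstar i (x1 :: xs)) /\ prefix b (f i x1) >] ].

Definition Pbar (k : nat) (i : 'I_m) (b : seq bool) : {set k.-tuple bool} :=
  [set c : k.-tuple bool | `[< exists (x1 : S) (xs : seq S),
      prefix (b ++ val c) (fstar i (x1 :: xs)) /\
      prefix b (f i x1) /\ b != f i x1 >] ].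

Definition P0 (k : nat) (i : 'I_m) : {set k.-tuple bool} := Pset k i [::].

Definition k_bit_delay_decodable (k : nat) : Prop :=
  (forall (i : 'I_m) (s : S),
      P0 k (tau i s) :&: Pbar k i (f i s) = set0) /\
  (forall (i : 'I_m) (s s' : S), s != s' -> f i s = f i s' ->
      P0 k (tau i s) :&: P0 k (tau i s') = set0).

Definition extendable : Prop := forall i : 'I_m, P0 1 i != set0.

End CodeTuple.

(* Main.v *)
Require Import Defs.
From mathcomp Require Import all_boot.
From mathcomp Require Import boolp.

Section Aux.
Variables (S : finType) (m : nat).
Variables (f : 'I_m -> S -> seq bool) (tau : 'I_m -> S -> 'I_m).

Definition endtab (j : 'I_m) (xs : seq S) := foldl (fun j x => tau j x) j xs.

Lemma fstar_cat j xs ys :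
  fstar f tau j (xs ++ ys) = fstar f tau j xs ++ fstar f tau (endtab j xs) ys.
Proof.
elim: xs j => [|x xs IH] j //=.
by rewrite IH catA.
Qed.

Lemma ext_long : extendable f tau -> forall n j, exists xs, n <= size (fstar f tau j xs).
Proof.
move=> He; elim=> [|n IH] j; first by exists [::].
have := He j; case/set0Pn => c; rewrite inE => /asboolP [x1 [xs0 [Hp _]]].
have [ys Hys] := IH (endtab j (x1 :: xs0)).
exists ((x1 :: xs0) ++ ys); rewrite fstar_cat size_cat.
have : size ([::] ++ val c) <= size (fstar f tau j (x1 :: xs0)) by exact: size_prefix.
rewrite /= size_tuple => H1.
by rewrite -addn1 addnC; apply: leq_add.
Qed.

Definition gk (k : nat) (d : 2.-tuple bool) : k.-tuple bool :=
  [tuple nth false d j | j < k].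

Lemma Pbar_sub k i b : k <= 2 -> extendable f tau ->
  Pbar f tau k i b \subset gk k @: Pbar f tau 2 i b.
Proof.
move=> Hk He; apply/subsetP => c; rewrite inE => /asboolP [x1 [xs [Hp [Hb Hne]]]].
have [ys Hys] := ext_long He 2 (endtab i (x1 :: xs)).
set w := fstar f tau i (x1 :: xs ++ ys).
have Hw : w = fstar f tau i (x1 :: xs) ++ fstar f tau (endtab i (x1 :: xs)) ys.
  by rewrite -fstar_cat.
move: Hp => /prefixP [r Hr].
have Hw2 : w = b ++ (val c ++ r ++ fstar f tau (endtab i (x1 :: xs)) ys).
  by rewrite Hw Hr -!catA.
set z := val c ++ r ++ _ in Hw2.
have Hz : 2 <= size z.
  rewrite /z !size_cat addnA; apply: (leq_trans Hys); exact: leq_addl.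
have Hsz : size (take 2 z) == 2 by rewrite size_takel.
pose d := Tuple Hsz.
apply/imsetP; exists d.
  rewrite inE; apply/asboolP; exists x1, (xs ++ ys); split; last by split.
  apply/prefixP; exists (drop 2 z); rewrite /= -catA cat_take_drop.
  by rewrite -Hw2.
apply: eq_from_tnth => j; rewrite tnth_mktuple /= nth_take; last first.
  by apply: leq_trans (ltn_ord j) Hk.
by rewrite /z nth_cat size_tuple ltn_ord -tnth_nth.
Qed.

End Aux.

Theorem lemma8 (S : finType) (m : nat)
    (f : 'I_m -> S -> seq bool) (tau : 'I_m -> S -> 'I_m)
    (HS : 2 <= #|S|) (Hm : 1 <= m) (k : nat) (Hk : k <= 2) :
  k_bit_delay_decodable f tau 2 -> extendable f tau ->
  forall (i : 'I_m) (s : S),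
    #|Pbar f tau k i (f i s)| + #|P0 f tau 2 (tau i s)| <= 4.
Proof.
move=> [H1 _] He i s.
apply: (@leq_trans (#|Pbar f tau 2 i (f i s)| + #|P0 f tau 2 (tau i s)|)).
  rewrite leq_add2r; apply: leq_trans (subset_leq_card (@Pbar_sub _ _ f tau k i (f i s) Hk He)) _.
  exact: leq_imset_card.
rewrite addnC -cardsUI H1 cards0 addn0.
apply: leq_trans (max_card _) _.
by rewrite card_tuple card_bool.
Qed.
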